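(* Let $x_0,\dots,x_n$ be terminal states with finite scalar objective values satisfying $u(x_i)\le u(x_j)$ for all $0\le i<j\le n$. Define $$I_1:=\{i: u(x_i)<u(x_{i+1}),\ 0\le i\le n-1\},\qquad I_2:=\{i: u(x_i)=u(x_{i+1}),\ 0\le i\le n-1\},$$ and $m:=|I_1|$. Introduce two auxiliary states $x_{-1},x_{n+1}$ with $u(x_{-1})=-\infty$ and $u(x_{n+1})=+\infty$. For $\gamma\ge1$ and $r:\{x_{-1},\dots,x_{n+1}\}\to[1/\gamma,1]$, define $$\mathcal{L}_{\rm OP-N}(r):=\sum_{i=0}^{n+1}\mathcal{L}_{\rm OP}(\{x_{i-1},x_i\};r),$$ and let $\widehat R$ be its minimizer over all such $r$. Let $f_1(\alpha):=\alpha^{m+2}\left(1-\frac{4}{\alpha+3}\right)^{n-m}$. The functions $\alpha\mapsto f_1(\alpha)$ and $\gamma\mapsto \gamma^{-1}f_1(\gamma^{1/(m+1)})$ are increasing on $[1,\infty)$ and tend to $+\infty$; let $\gamma_0\ge 1$ be the unique value with $f_1(\gamma_0^{1/(m+1)})=\gamma_0$, and for $\gamma>\gamma_0$ let $\alpha_\gamma>1$ be the unique solution of $f_1(\alpha_\gamma)=\gamma$, and put $\beta_\gamma:=\frac{\alpha_\gamma-1}{\alpha_\gamma+3}$. Then for every $\gamma>\gamma_0$: $$\widehat R(x_0)=\alpha_\gamma\gamma^{-1},\qquad \widehat R(x_{i+1})=\alpha_\gamma\widehat R(x_i)\ (i\in I_1),\qquad \widehat R(x_{i+1})=\beta_\gamma\widehat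 R(x_i)\ (i\in I_2).$$ Moreover, the minimal value of $\mathcal{L}_{\rm OP-N}$ is strictly decreasing in $\gamma$, so that minimizing $\mathcal{L}_{\rm OP-N}$ with $\gamma$ variable drives $\gamma\to+\infty$, and as $\gamma\to\infty$ one has $\alpha_\gamma\to+\infty$ and $\beta_\gamma\to1$.
   Context: For a pair $X=\{x,x'\}$ of states with objective $u$ and a positive function $r$, the label distribution is $\mathbb{P}_y(x\mid X)=\tfrac12\big(\mathbf{1}[u(x)>u(x')]+\mathbf{1}[u(x)\ge u(x')]\big)$ (symmetrically for $x'$), the model distribution is $\mathbb{P}(x\mid X,r)=r(x)/(r(x)+r(x'))$, and $\mathcal{L}_{\rm OP}(X;r)=\mathrm{KL}(\mathbb{P}_y(\cdot\mid X)\,\|\,\mathbb{P}(\cdot\mid X,r))$. Thus for $u(x)<u(x')$ the loss is $-\log\frac{r(x')}{r(x)+r(x')}$, and for $u(x)=u(x')$ it equals $-\tfrac12\big(\log\frac{r(x)}{r(x)+r(x')}+\log\frac{r(x')}{r(x)+r(x')}\big)-\log 2$. *)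

(* Defs.v *)
From Stdlib Require Import Reals Lra List.
From Coquelicot Require Import Rbar.
Open Scope R_scope.

(* Label distribution P_y(x | {x,x'}) with a = u(x), b = u(x') (extended reals). *)
Definition ylab (a b : Rbar) : R :=
  / 2 * ((if Rbar_lt_dec b a then 1 else 0) + (if Rbar_le_dec b a then 1 else 0)).

Definition klterm (p q : R) : R :=
  if Req_EM_T p 0 then 0 else p * ln (p / q).

(* L_OP({x,x'}; r) = KL(P_y(.|X) || P(.|X,r)), with ua = u(x), ub = u(x'),
   ra = r(x), rb = r(x'). *)
Definition L_OP (ua ub : Rbar) (ra rb : R) : R :=
  klterm (ylab ua ub) (ra / (ra + rb)) + klterm (ylab ub ua) (rb / (ra + rb)).

(* States x_{-1}, x_0, ..., x_n, x_{n+1} are encoded by indices k = 0, ..., n+2: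
   index k stands for x_{k-1}.  u_ext gives the (extended) objective. *)
Definition u_ext (n : nat) (u : nat -> R) (k : nat) : Rbar :=
  match k with
  | O => m_infty
  | S j => if Nat.leb j n then Finite (u j) else p_infty
  end.

Definition L_OPN (n : nat) (u : nat -> R) (r : nat -> R) : R :=
  sum_f_R0 (fun i => L_OP (u_ext n u i) (u_ext n u (S i)) (r i) (r (S i))) (S n).

(* r : {x_{-1},...,x_{n+1}} -> [1/gamma, 1]  (values at other indices irrelevant). *)
Definition admissible (n : nat) (gamma : R) (r : nat -> R) : Prop :=
  forall k, (k <= S (S n))%nat -> / gamma <= r k <= 1.

Definition is_minimizer (n : nat) (u : nat -> R) (gamma : R) (r : nat -> R) : Prop :=
  admissible n gamma r /\
  forall r', admissible n gamma r' -> L_OPN n u r <= L_OPN n u r'.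

Definition m_count (n : nat) (u : nat -> R) : nat :=
  length (filter (fun i => if Rlt_dec (u i) (u (S i)) then true else false) (seq 0 n)).

Definition f1 (n m : nat) (alpha : R) : R :=
  alpha ^ (m + 2) * (1 - 4 / (alpha + 3)) ^ (n - m).

Definition g1 (n m : nat) (gamma : R) : R :=
  / gamma * f1 n m (Rpower gamma (/ INR (m + 1))).

Definition beta_of (alpha : R) : R := (alpha - 1) / (alpha + 3).

(* Main.v *)
Require Import Defs.
From Stdlib Require Import Reals.
From Coquelicot Require Import Rbar.
From Stdlib Require Import Lra Lia List.
From Coquelicot Require Import Coquelicot.
Open Scope R_scope.
Definition phi (p k : nat) (t : R) := t ^ p * (1 - 4 / (t + 3)) ^ k.
Lemma phi_cont p k y a : 1 <= a -> continuity_pt (fun t => phi p k t - y) a.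
Proof. intros Ha. apply continuity_pt_filterlim.
assert (H : ex_derive (fun t => phi p k t - y) a). { unfold phi. auto_derive. lra. }
exact (ex_derive_continuous _ _ H). Qed.

Lemma pow_lt_mono (a b : R) (p : nat) : 0 <= a -> a < b -> (1 <= p)%nat -> a ^ p < b ^ p.
Proof. intros Ha Hab Hp. induction p as [|p IH]; [lia|].
destruct p as [|p]. simpl; lra.
assert (IH' : a ^ S p < b ^ S p) by (apply IH; lia).
assert (0 <= a ^ S p) by (apply pow_le; lra).
change (a * a ^ S p < b * b ^ S p). nra. Qed.

Lemma Bq_props (a : R) : 1 <= a -> 0 <= 1 - 4 / (a + 3) < 1.
Proof. intros Ha. assert (1 - 4 / (a+3) = (a - 1) / (a + 3)) by (field; lra).
rewrite H. split. apply Rdiv_le_0_compat; lra.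
apply (Rmult_lt_reg_r (a+3)); [lra|]. unfold Rdiv. rewrite Rmult_assoc, Rinv_l; lra. Qed.

Lemma Bq_mono (a b : R) : 1 <= a -> a <= b -> 1 - 4/(a+3) <= 1 - 4/(b+3).
Proof. intros Ha Hab. unfold Rdiv. 
assert (/ (b+3) <= / (a+3)) by (apply Rinv_le_contravar; lra). lra. Qed.

Lemma Bq_pos (b : R) : 1 < b -> 0 < 1 - 4/(b+3).
Proof. intros Hb. assert (1 - 4 / (b+3) = (b - 1) / (b + 3)) by (field; lra).
rewrite H. apply Rdiv_lt_0_compat; lra. Qed.

Lemma phi_mono p k a b : (1 <= p)%nat -> 1 <= a -> a < b -> phi p k a < phi p k b.
Proof. intros Hp Ha Hab. unfold phi.
assert (H1 : a ^ p < b ^ p) by (apply pow_lt_mono; lra || lia).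
assert (H2 : (1 - 4/(a+3)) ^ k <= (1 - 4/(b+3)) ^ k).
{ apply pow_incr. split. apply Bq_props; lra. apply Bq_mono; lra. }
assert (H3 : 0 < (1 - 4/(b+3)) ^ k) by (apply pow_lt, Bq_pos; lra).
assert (H4 : 0 <= a ^ p) by (apply pow_le; lra).
assert (H5 : 0 <= (1 - 4/(a+3)) ^ k) by (apply pow_le, Bq_props; lra).
nra. Qed.

Lemma phi_mono_le p k a b : (1 <= p)%nat -> 1 <= a -> a <= b -> phi p k a <= phi p k b.
Proof. intros. destruct (Req_dec a b). subst; lra. left; apply phi_mono; lra || lia. Qed.

Lemma phi_1_le p k : phi p k 1 <= 1.
Proof. unfold phi. rewrite pow1. replace (1 - 4 / (1 + 3)) with 0 by field.
destruct k. simpl; lra. rewrite pow_i by lia. lra. Qed.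

Lemma phi_unb p k : (1 <= p)%nat -> forall M, exists A, 1 <= A /\ forall a, A <= a -> M < phi p k a.
Proof. intros Hp M. exists (Rmax 5 (Rabs M * 2 ^ k + 1)). split.
{ apply Rle_trans with 5; [lra| apply Rmax_l]. }
intros a Ha. assert (H5 : 5 <= a) by (eapply Rle_trans; [apply Rmax_l|exact Ha]).
assert (HM : Rabs M * 2 ^ k + 1 <= a) by (eapply Rle_trans; [apply Rmax_r|exact Ha]).
assert (Hq : / 2 <= 1 - 4 / (a + 3)).
{ assert (4 / (a+3) <= /2). { apply (Rmult_le_reg_r (a+3)); [lra|]. unfold Rdiv.
  rewrite Rmult_assoc, Rinv_l by lra. lra. } lra. }
assert (Hqk : (/2) ^ k <= (1 - 4/(a+3)) ^ k) by (apply pow_incr; lra).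
assert (Hap : a <= a ^ p). { replace a with (a ^ 1) at 1 by (simpl; ring). apply Rle_pow; lra || lia. }
rewrite <- Rinv_pow in Hqk by lra.
assert (H2 : 0 < 2 ^ k) by (apply pow_lt; lra).
assert (Hab : M <= Rabs M) by apply Rle_abs.
assert (Habs : 0 <= Rabs M) by apply Rabs_pos.
unfold phi.
assert (a / 2 ^ k <= a ^ p * (1 - 4 / (a + 3)) ^ k).
{ unfold Rdiv. apply Rmult_le_compat; try lra. left; apply Rinv_0_lt_compat; lra. }
assert (M < a / 2 ^ k).
{ apply (Rmult_lt_reg_r (2 ^ k)); [lra|]. unfold Rdiv. rewrite Rmult_assoc, Rinv_l by lra.
  assert (1 <= 2 ^ k) by (apply pow_R1_Rle; lra). nra. }
lra. Qed.

Lemma phi_surj p k y : (1 <= p)%nat -> 1 <= y -> exists t, 1 <= t /\ phi p k t = y.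
Proof. intros Hp Hy.
destruct (Req_dec (phi p k 1) y) as [E|E]. { exists 1. split; lra. }
assert (Hl : phi p k 1 < y) by (pose proof (phi_1_le p k); lra).
destruct (phi_unb p k Hp y) as [A [HA1 HA]].
assert (HA2 : y < phi p k (A + 1)) by (apply HA; lra).
destruct (Ranalysis5.IVT_interv (fun t => phi p k t - y) 1 (A+1)) as [z [Hz1 Hz2]].
- intros a Ha. apply phi_cont. lra.
- lra.
- lra.
- lra.
- exists z. split; lra. Qed.
Lemma ln_le_xm1 x : 0 < x -> ln x <= x - 1.
Proof. intros Hx. pose proof (exp_ineq1_le (ln x)). rewrite exp_ln in H by lra. lra. Qed.
Lemma ln_lt_xm1 x : 0 < x -> x <> 1 -> ln x < x - 1.
Proof. intros Hx H1. assert (ln x <> 0). { intro E. apply H1. rewrite <- (exp_ln x) by lra. rewrite E, exp_0. reflexivity. }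
pose proof (exp_ineq1 (ln x) H). rewrite exp_ln in H0 by lra. lra. Qed.

Lemma wconc_gen w x : 0 < w < 1 -> 0 < x ->
  w * ln x <= ln (w * x + (1 - w)) /\ (x <> 1 -> w * ln x < ln (w * x + (1 - w))).
Proof. intros Hw Hx. set (y := w * x + (1 - w)).
assert (Hy : 0 < y) by (unfold y; nra).
assert (E1 : ln x - ln y = ln (x / y)) by (rewrite ln_div; lra).
assert (E2 : - ln y = ln (/ y)) by (rewrite ln_Rinv; lra).
assert (Hs : w * (x / y - 1) + (1 - w) * (/ y - 1) = 0) by (unfold y in *; field; lra).
assert (P1 : 0 < x / y) by (apply Rdiv_lt_0_compat; lra).
assert (P2 : 0 < / y) by (apply Rinv_0_lt_compat; lra).
assert (Hk : w * ln x - ln y = w * ln (x / y) + (1 - w) * ln (/ y)) by (rewrite <- E1, <- E2; ring).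
split.
- pose proof (ln_le_xm1 _ P1). pose proof (ln_le_xm1 _ P2).
  assert (w * ln (x / y) <= w * (x / y - 1)) by (apply Rmult_le_compat_l; lra).
  assert ((1 - w) * ln (/ y) <= (1 - w) * (/ y - 1)) by (apply Rmult_le_compat_l; lra).
  lra.
- intros Hx1. assert (x / y <> 1).
  { intro E. apply Hx1. assert (x = y). { unfold Rdiv in E. apply (Rmult_eq_reg_r (/ y)). rewrite Rinv_r by lra. lra. apply Rinv_neq_0_compat; lra. }
    unfold y in H. assert ((1 - w) * (x - 1) = 0) by (replace ((1-w)*(x-1)) with (x - (w*x + (1-w))) by ring; lra).
    destruct (Rmult_integral _ _ H0); lra. }
  pose proof (ln_lt_xm1 _ P1 H). pose proof (ln_le_xm1 _ P2).
  assert (w * ln (x / y) < w * (x / y - 1)) by (apply Rmult_lt_compat_l; lra).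
  assert ((1 - w) * ln (/ y) <= (1 - w) * (/ y - 1)) by (apply Rmult_le_compat_l; lra).
  lra.
Qed.

Definition cS (rho : R) : R := ln (1 + / rho).
Definition cE (rho : R) : R := / 2 * ln ((1 + rho) / 2) + / 2 * ln ((1 + rho) / (2 * rho)).

Lemma tanS (al rho : R) : 1 < al -> 0 < rho ->
  let lam := / (1 + al) in
  cS al + lam * ln al <= cS rho + lam * ln rho /\
  (rho <> al -> cS al + lam * ln al < cS rho + lam * ln rho).
Proof. intros Ha Hr lam. set (w := al / (1 + al)). set (x := rho / al).
assert (Hw : 0 < w < 1). { unfold w; split. apply Rdiv_lt_0_compat; lra.
  apply (Rmult_lt_reg_r (1+al)); [lra|]. unfold Rdiv. rewrite Rmult_assoc, Rinv_l; lra. }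
assert (Hx : 0 < x) by (unfold x; apply Rdiv_lt_0_compat; lra).
set (y := w * x + (1 - w)).
assert (Hy : 0 < y) by (unfold y; nra).
assert (Hlw : lam + w = 1) by (unfold lam, w; field; lra).
assert (E0 : rho = x * al) by (unfold x; field; lra).
assert (E1 : 1 + / rho = ((1 + al) * y) / (x * al)) by (unfold y, w, x; field; split; lra).
assert (E2 : 1 + / al = (1 + al) / al) by (field; lra).
unfold cS. rewrite E1, E2, E0.
rewrite !ln_div, !ln_mult by (try apply Rmult_lt_0_compat; lra).
destruct (wconc_gen w x Hw Hx) as [H1 H2]. fold y in H1, H2.
split.
- rewrite (ln_mult x al) by lra. assert (Hl : lam = 1 - w) by lra. rewrite Hl.
  assert (Eq : ln (1 + al) + ln y - (ln x + ln al) + (1 - w) * (ln x + ln al) - (ln (1 + al) - ln al + (1 - w) * ln al) = ln y - w * ln x) by ring.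
  lra.
- intros Hne. assert (x <> 1) by (intro Hx1; apply Hne; rewrite Hx1; ring).
  specialize (H2 H).
  rewrite (ln_mult x al) by lra. assert (Hl : lam = 1 - w) by lra. rewrite Hl.
  assert (Eq : ln (1 + al) + ln y - (ln x + ln al) + (1 - w) * (ln x + ln al) - (ln (1 + al) - ln al + (1 - w) * ln al) = ln y - w * ln x) by ring.
  lra.
Qed.

Lemma cE_expand rho : 0 < rho -> cE rho = ln (1 + rho) - ln 2 - / 2 * ln rho.
Proof. intros Hr. unfold cE. rewrite !ln_div, ln_mult by (try apply Rmult_lt_0_compat; lra). lra. Qed.


Lemma tanE (al rho : R) : 1 < al -> 0 < rho ->
  let lam := / (1 + al) in let be := beta_of al in
  cE be + lam * ln be <= cE rho + lam * ln rho /\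
  (rho <> be -> cE be + lam * ln be < cE rho + lam * ln rho).
Proof. intros Ha Hr lam be.
assert (Hb : 0 < be) by (unfold be, beta_of; apply Rdiv_lt_0_compat; lra).
set (c := be / (1 + be)). set (x := rho / be).
assert (Hc : 0 < c < 1). { unfold c; split. apply Rdiv_lt_0_compat; lra.
  apply (Rmult_lt_reg_r (1+be)); [lra|]. unfold Rdiv. rewrite Rmult_assoc, Rinv_l; lra. }
assert (Hx : 0 < x) by (unfold x; apply Rdiv_lt_0_compat; lra).
set (y := c * x + (1 - c)).
assert (Hy : 0 < y) by (unfold y; nra).
assert (Hlc : lam = / 2 - c) by (unfold lam, c, be, beta_of; field; lra).
assert (E0 : rho = x * be) by (unfold x; field; lra).
assert (E1 : 1 + rho = (1 + be) * y) by (unfold y, c, x; field; lra).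
rewrite !cE_expand by lra. rewrite E1, E0.
rewrite !ln_mult by lra.
destruct (wconc_gen c x Hc Hx) as [H1 H2]. fold y in H1, H2.
rewrite Hlc.
assert (Eq : ln (1 + be) + ln y - ln 2 - / 2 * (ln x + ln be) + (/ 2 - c) * (ln x + ln be) - (ln (1 + be) - ln 2 - / 2 * ln be + (/ 2 - c) * ln be) = ln y - c * ln x) by ring.
split.
- lra.
- intros Hne. assert (x <> 1) by (intro Hx1; apply Hne; rewrite Hx1; ring).
  specialize (H2 H). lra.
Qed.

Lemma L_OP_S ua ub ra rb : Rbar_lt ua ub -> 0 < ra -> 0 < rb -> L_OP ua ub ra rb = cS (rb / ra).
Proof. intros H Ha Hb. unfold L_OP, ylab, klterm, cS.
destruct (Rbar_lt_dec ub ua) as [h|_]. { exfalso. apply (Rbar_lt_not_le _ _ h). apply Rbar_lt_le; exact H. }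
destruct (Rbar_le_dec ub ua) as [h|_]. { exfalso. apply (Rbar_lt_not_le _ _ H h). }
destruct (Rbar_lt_dec ua ub) as [_|h]; [|tauto].
destruct (Rbar_le_dec ua ub) as [_|h]; [|exfalso; apply h, Rbar_lt_le, H].
replace (/ 2 * (0 + 0)) with 0 by ring. replace (/ 2 * (1 + 1)) with 1 by field.
destruct (Req_EM_T 0 0) as [_|h]; [|tauto].
destruct (Req_EM_T 1 0) as [h|_]; [lra|].
rewrite Rmult_1_l, Rplus_0_l. f_equal. field. lra. Qed.

Lemma L_OP_E a ra rb : 0 < ra -> 0 < rb -> L_OP (Finite a) (Finite a) ra rb = cE (rb / ra).
Proof. intros Ha Hb. unfold L_OP, ylab, klterm, cE.
destruct (Rbar_lt_dec (Finite a) (Finite a)) as [h|_]. { simpl in h; lra. }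
destruct (Rbar_le_dec (Finite a) (Finite a)) as [_|h]; [| exfalso; apply h; simpl; lra].
replace (/ 2 * (0 + 1)) with (/ 2) by field.
destruct (Req_EM_T (/2) 0) as [h|_]; [lra|].
f_equal; f_equal; f_equal; field; lra. Qed.

Definition isS (n : nat) (u : nat -> R) (k : nat) : bool :=
  match k with
  | O => true
  | S j => if Nat.ltb j n then (if Rlt_dec (u j) (u (S j)) then true else false) else true
  end.
Definition rho (n : nat) (u : nat -> R) (al : R) (k : nat) : R :=
  if isS n u k then al else beta_of al.
Fixpoint Pch (n : nat) (u : nat -> R) (al : R) (k : nat) : R :=
  match k with O => 1 | S j => Pch n u al j * rho n u al j end.
Definition cost (n : nat) (u : nat -> R) (k : nat) (x : R) : R :=
  if isS n u k then cS x else cE x.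

Lemma pair_cost n u (hmono : forall i j : nat, (i < j <= n)%nat -> u i <= u j) (r : nat -> R) k :
  (k <= S n)%nat -> 0 < r k -> 0 < r (S k) ->
  L_OP (u_ext n u k) (u_ext n u (S k)) (r k) (r (S k)) = cost n u k (r (S k) / r k).
Proof. intros Hk H1 H2. unfold cost, isS.
destruct k as [|j].
- apply L_OP_S; auto. simpl. destruct (Nat.leb 0 n); simpl; auto.
- change (u_ext n u (S j)) with (if Nat.leb j n then Finite (u j) else p_infty).
  change (u_ext n u (S (S j))) with (if Nat.leb (S j) n then Finite (u (S j)) else p_infty).
  destruct (Nat.ltb j n) eqn:E.
  + apply Nat.ltb_lt in E.
    assert (E1 : Nat.leb j n = true) by (apply Nat.leb_le; lia).
    assert (E2 : Nat.leb (S j) n = true) by (apply Nat.leb_le; lia).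
    rewrite E1, E2. destruct (Rlt_dec (u j) (u (S j))) as [h|h].
    * apply L_OP_S; auto.
    * assert (u j <= u (S j)) by (apply hmono; lia).
      assert (u j = u (S j)) by lra. rewrite <- H0. apply L_OP_E; auto.
  + apply Nat.ltb_ge in E. assert (j = n) by lia. subst j.
    rewrite Nat.leb_refl. assert (E2 : Nat.leb (S n) n = false) by (apply Nat.leb_gt; lia).
    rewrite E2. apply L_OP_S; simpl; auto.
Qed.

Definition cnt (u : nat -> R) (N : nat) : nat :=
  length (filter (fun i => if Rlt_dec (u i) (u (S i)) then true else false) (seq 0 N)).

Lemma cnt_S u N : cnt u (S N) = (cnt u N + (if Rlt_dec (u N) (u (S N)) then 1 else 0))%nat.
Proof. unfold cnt. rewrite seq_S, filter_app, length_app. simpl.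
destruct (Rlt_dec (u N) (u (S N))); simpl; lia. Qed.

Lemma cnt_le u N : (cnt u N <= N)%nat.
Proof. induction N. unfold cnt; simpl; lia. rewrite cnt_S. destruct (Rlt_dec _ _); lia. Qed.

Lemma cnt_mono u d N : (cnt u N <= cnt u (N + d) /\ N - cnt u N <= (N + d) - cnt u (N + d))%nat.
Proof. induction d. rewrite Nat.add_0_r; lia.
replace (N + S d)%nat with (S (N + d)) by lia. rewrite cnt_S.
pose proof (cnt_le u (N + d)). pose proof (cnt_le u N).
destruct (Rlt_dec _ _); lia. Qed.

Lemma beta_pos al : 1 < al -> 0 < beta_of al < 1.
Proof. intros. unfold beta_of. split. apply Rdiv_lt_0_compat; lra.
apply (Rmult_lt_reg_r (al+3)); [lra|]. unfold Rdiv. rewrite Rmult_assoc, Rinv_l; lra. Qed.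

Lemma beta_eq al : 1 < al -> beta_of al = 1 - 4 / (al + 3).
Proof. intros. unfold beta_of. field. lra. Qed.

Lemma Pch_form n u al N : (N <= n)%nat ->
  Pch n u al (S N) = al ^ (S (cnt u N)) * beta_of al ^ (N - cnt u N).
Proof. induction N; intros HN.
- simpl. unfold rho, cnt. simpl. ring.
- change (Pch n u al (S (S N))) with (Pch n u al (S N) * rho n u al (S N)).
  rewrite IHN by lia. unfold rho, isS.
  assert (E : Nat.ltb N n = true) by (apply Nat.ltb_lt; lia). rewrite E.
  rewrite cnt_S. pose proof (cnt_le u N).
  destruct (Rlt_dec (u N) (u (S N))).
  + replace (cnt u N + 1)%nat with (S (cnt u N)) by lia.
    replace (S N - S (cnt u N))%nat with (N - cnt u N)%nat by lia. simpl. ring.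
  + replace (cnt u N + 0)%nat with (cnt u N) by lia.
    replace (S N - cnt u N)%nat with (S (N - cnt u N)) by lia. simpl. ring.
Qed.

Lemma Pch_end n u al : 1 < al -> Pch n u al (S (S n)) = f1 n (m_count n u) al.
Proof. intros Ha. change (Pch n u al (S (S n))) with (Pch n u al (S n) * rho n u al (S n)).
rewrite Pch_form by lia. unfold rho, isS. rewrite Nat.ltb_irrefl.
unfold f1. change (m_count n u) with (cnt u n). rewrite <- beta_eq by lra.
replace (cnt u n + 2)%nat with (S (S (cnt u n))) by lia. simpl. ring. Qed.

Lemma pow_anti b i j : 0 < b <= 1 -> (i <= j)%nat -> b ^ j <= b ^ i.
Proof. intros Hb Hij. replace j with (i + (j - i))%nat by lia. rewrite pow_add.
assert (b ^ (j - i) <= 1). { rewrite <- (pow1 (j - i)). apply pow_incr; lra. }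
assert (0 <= b ^ i) by (apply pow_le; lra). nra. Qed.

Lemma Pch_bounds n u al k : 1 < al -> al ^ (S (m_count n u)) < f1 n (m_count n u) al ->
  (k <= S (S n))%nat -> 1 <= Pch n u al k <= f1 n (m_count n u) al.
Proof. intros Ha Hg Hk.
set (m := m_count n u) in *. set (g := f1 n m al) in *.
destruct (beta_pos al Ha) as [Hb0 Hb1]. set (be := beta_of al) in *.
assert (Hgeq : g = al ^ (S m) * (al * be ^ (n - m))).
{ unfold g, f1. unfold be. rewrite beta_eq by lra. replace (m + 2)%nat with (S (S m)) by lia. simpl. ring. }
assert (Hpm : 0 < al ^ S m) by (apply pow_lt; lra).
assert (Hkey : 1 < al * be ^ (n - m)).
{ destruct (Rle_lt_dec (al * be ^ (n - m)) 1) as [h|h]; auto.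
  exfalso. assert (al ^ S m * (al * be ^ (n - m)) <= al ^ S m * 1) by (apply Rmult_le_compat_l; lra). lra. }
destruct k as [|N]. { simpl. assert (1 <= al ^ S m) by (apply pow_R1_Rle; lra). lra. }
destruct (Nat.eq_dec N (S n)) as [->|HN].
{ rewrite Pch_end by lra. fold m. fold g. assert (1 <= al ^ S m) by (apply pow_R1_Rle; lra). lra. }
assert (HNn : (N <= n)%nat) by lia.
rewrite Pch_form by exact HNn.
destruct (cnt_mono u (n - N) N) as [C1 C2]. replace (N + (n - N))%nat with n in C1, C2 by lia.
change (cnt u n) with m in C1, C2.
fold be.
assert (Hc1 : al ^ S (cnt u N) <= al ^ S m) by (apply Rle_pow; lra || lia).
assert (Hc0 : 1 <= al ^ (cnt u N)) by (apply pow_R1_Rle; lra).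
assert (Hb2 : be ^ (N - cnt u N) <= 1) by (rewrite <- (pow1 (N - cnt u N)); apply pow_incr; lra).
assert (Hb3 : be ^ (n - m) <= be ^ (N - cnt u N)) by (apply pow_anti; lra || lia).
assert (Hb4 : 0 < be ^ (n - m)) by (apply pow_lt; lra).
split.
- simpl. assert (al * be ^ (n - m) <= al * al ^ cnt u N * be ^ (N - cnt u N)).
  { replace (al * be ^ (n - m)) with (al * 1 * be ^ (n - m)) by ring.
    apply Rmult_le_compat; try lra. apply Rmult_le_compat_l; lra. }
  lra.
- assert (0 <= al ^ S (cnt u N)) by (apply pow_le; lra).
  assert (al ^ S (cnt u N) * be ^ (N - cnt u N) <= al ^ S (cnt u N) * 1) by (apply Rmult_le_compat_l; lra).
  lra.
Qed.

Lemma ln_le' x y : 0 < x -> x <= y -> ln x <= ln y.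
Proof. intros. destruct (Req_dec x y). subst; lra. left; apply ln_increasing; lra. Qed.

Lemma telesc (f : nat -> R) N : sum_f_R0 (fun k => f (S k) - f k) N = f (S N) - f 0%nat.
Proof. induction N; simpl. ring. rewrite IHN. ring. Qed.

Lemma sum_lt (a b : nat -> R) N : (forall k, (k <= N)%nat -> b k <= a k) ->
  forall k0, (k0 <= N)%nat -> b k0 < a k0 -> sum_f_R0 b N < sum_f_R0 a N.
Proof. induction N; intros H k0 Hk0 Hlt.
- simpl. assert (k0 = 0%nat) by lia. subst; lra.
- simpl. destruct (Nat.eq_dec k0 (S N)) as [->|hn].
  + assert (sum_f_R0 b N <= sum_f_R0 a N) by (apply sum_Rle; intros; apply H; lia). lra.
  + assert (sum_f_R0 b N < sum_f_R0 a N) by (apply (IHN (fun k h => H k (le_S _ _ h)) k0); lia || lra).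
    assert (b (S N) <= a (S N)) by (apply H; lia). lra.
Qed.



Definition rstar n u al g (k : nat) : R := Pch n u al k / g.

Lemma adm_pos n g r k : 1 <= g -> admissible n g r -> (k <= S (S n))%nat -> 0 < r k.
Proof. intros Hg Ha Hk. destruct (Ha k Hk). assert (0 < / g) by (apply Rinv_0_lt_compat; lra). lra. Qed.

Lemma L_sum n u (hmono : forall i j : nat, (i < j <= n)%nat -> u i <= u j) r :
  (forall k, (k <= S (S n))%nat -> 0 < r k) ->
  L_OPN n u r = sum_f_R0 (fun k => cost n u k (r (S k) / r k)) (S n).
Proof. intros Hp. unfold L_OPN. apply sum_eq. intros k Hk. apply pair_cost; auto; apply Hp; lia. Qed.

Lemma tan_k n u al k x : 1 < al -> 0 < x ->
  cost n u k (rho n u al k) + / (1 + al) * ln (rho n u al k) <= cost n u k x + / (1 + al) * ln x /\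
  (x <> rho n u al k -> cost n u k (rho n u al k) + / (1 + al) * ln (rho n u al k) < cost n u k x + / (1 + al) * ln x).
Proof. intros Ha Hx. unfold cost, rho. destruct (isS n u k).
- apply tanS; auto.
- apply tanE; auto.
Qed.

Lemma rstar_adm n u al : 1 < al -> al ^ (S (m_count n u)) < f1 n (m_count n u) al ->
  admissible n (f1 n (m_count n u) al) (rstar n u al (f1 n (m_count n u) al)).
Proof. intros Ha Hg k Hk. pose proof (Pch_bounds n u al k Ha Hg Hk).
pose proof (Pch_bounds n u al 0 Ha Hg ltac:(lia)). simpl in H0.
set (g := f1 n (m_count n u) al) in *. unfold rstar. unfold Rdiv.
assert (0 < / g) by (apply Rinv_0_lt_compat; lra).
split.
- rewrite <- (Rmult_1_l (/ g)) at 1. apply Rmult_le_compat_r; lra.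
- apply (Rmult_le_reg_r g); [lra|]. rewrite Rmult_assoc, Rinv_l by lra. lra.
Qed.

Lemma main_ineq n u (hmono : forall i j : nat, (i < j <= n)%nat -> u i <= u j) al :
  1 < al -> al ^ (S (m_count n u)) < f1 n (m_count n u) al ->
  forall r, admissible n (f1 n (m_count n u) al) r ->
  L_OPN n u (rstar n u al (f1 n (m_count n u) al)) <= L_OPN n u r /\
  (L_OPN n u r <= L_OPN n u (rstar n u al (f1 n (m_count n u) al)) ->
     r 0%nat = / f1 n (m_count n u) al /\
     forall k, (k <= S n)%nat -> r (S k) = rho n u al k * r k).
Proof. intros Ha Hg r Hr.
pose proof (rstar_adm n u al Ha Hg) as Hs.
pose proof (Pch_bounds n u al 0 Ha Hg ltac:(lia)) as Hg1. simpl in Hg1.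
pose proof (Pch_bounds n u al) as PB.
set (g := f1 n (m_count n u) al) in *.
set (rs := rstar n u al g).
assert (Hg0 : 1 <= g) by lra.
assert (Prp : forall k, (k <= S (S n))%nat -> 0 < r k) by (intros; eapply adm_pos; eauto).
assert (Psp : forall k, (k <= S (S n))%nat -> 0 < rs k) by (intros; eapply adm_pos; eauto).
set (lam := / (1 + al)).
assert (Hlam : 0 < lam) by (apply Rinv_0_lt_compat; lra).
set (A := fun k => cost n u k (r (S k) / r k) + (lam * ln (r (S k)) - lam * ln (r k))).
set (B := fun k => cost n u k (rs (S k) / rs k) + (lam * ln (rs (S k)) - lam * ln (rs k))).
assert (SA : sum_f_R0 A (S n) = L_OPN n u r + (lam * ln (r (S (S n))) - lam * ln (r 0%nat))).
{ unfold A. rewrite sum_plus. rewrite (telesc (fun k => lam * ln (r k))). rewrite (L_sum n u hmono r Prp). reflexivity. }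
assert (SB : sum_f_R0 B (S n) = L_OPN n u rs + (lam * ln (rs (S (S n))) - lam * ln (rs 0%nat))).
{ unfold B. rewrite sum_plus. rewrite (telesc (fun k => lam * ln (rs k))). rewrite (L_sum n u hmono rs Psp). reflexivity. }
assert (Rat : forall k, (k <= S n)%nat -> rs (S k) / rs k = rho n u al k).
{ intros k Hk. unfold rs, rstar. simpl Pch. destruct (PB k Ha Hg ltac:(lia)). field. lra. }
assert (AB : forall k, (k <= S n)%nat -> B k <= A k /\ (r (S k) / r k <> rho n u al k -> B k < A k)).
{ intros k Hk. unfold A, B.
  assert (E1 : lam * ln (r (S k)) - lam * ln (r k) = lam * ln (r (S k) / r k)).
  { rewrite ln_div by (apply Prp; lia). ring. }
  assert (E2 : lam * ln (rs (S k)) - lam * ln (rs k) = lam * ln (rs (S k) / rs k)).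
  { rewrite ln_div by (apply Psp; lia). ring. }
  rewrite E1, E2, Rat by exact Hk.
  apply tan_k; auto. apply Rdiv_lt_0_compat; apply Prp; lia. }
assert (Hend : rs (S (S n)) = 1).
{ unfold rs, rstar. fold g. rewrite Pch_end by lra. fold g. field. lra. }
assert (H0 : rs 0%nat = / g) by (unfold rs, rstar; simpl; field; lra).
assert (Hr0 : / g <= r 0%nat) by (apply (Hr 0%nat); lia).
assert (Hrn : r (S (S n)) <= 1) by (apply (Hr (S (S n))); lia).
assert (Hig : 0 < / g) by (apply Rinv_0_lt_compat; lra).
assert (L1 : ln (r (S (S n))) <= ln 1) by (apply ln_le'; auto).
assert (L2 : ln (/ g) <= ln (r 0%nat)) by (apply ln_le'; auto).
assert (L1' : lam * ln (r (S (S n))) <= lam * ln 1) by (apply Rmult_le_compat_l; lra).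
assert (L2' : lam * ln (/ g) <= lam * ln (r 0%nat)) by (apply Rmult_le_compat_l; lra).
rewrite Hend, H0 in SB.
assert (SBA : sum_f_R0 B (S n) <= sum_f_R0 A (S n)) by (apply sum_Rle; intros; apply AB; auto).
split.
- lra.
- intros Hle. split.
  + destruct (Req_dec (r 0%nat) (/ g)) as [e|ne]; auto. exfalso.
    assert (ln (/ g) < ln (r 0%nat)) by (apply ln_increasing; lra).
    assert (lam * ln (/ g) < lam * ln (r 0%nat)) by (apply Rmult_lt_compat_l; lra).
    lra.
  + intros k Hk. destruct (Req_dec (r (S k) / r k) (rho n u al k)) as [e|ne].
    * rewrite <- e. field. assert (0 < r k) by (apply Prp; lia). lra.
    * exfalso. assert (sum_f_R0 B (S n) < sum_f_R0 A (S n)).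
      { apply (sum_lt A B (S n) (fun k h => proj1 (AB k h)) k Hk). apply AB; auto. }
      lra.
Qed.

Lemma INR_m1_pos m : 0 < INR (m + 1).
Proof. apply lt_0_INR. lia. Qed.

Lemma rp_inv m T : 0 < T -> Rpower (T ^ (m + 1)) (/ INR (m + 1)) = T.
Proof. intros HT. rewrite <- Rpower_pow by exact HT. rewrite Rpower_mult.
rewrite Rinv_r by (pose proof (INR_m1_pos m); lra). apply Rpower_1; exact HT. Qed.

Lemma rp_pos x y : 0 < Rpower x y.
Proof. unfold Rpower. apply exp_pos. Qed.

Lemma rp_pow m x : 0 < x -> (Rpower x (/ INR (m + 1))) ^ (m + 1) = x.
Proof. intros Hx. rewrite <- Rpower_pow by apply rp_pos. rewrite Rpower_mult.
rewrite Rinv_l by (pose proof (INR_m1_pos m); lra). apply Rpower_1; exact Hx. Qed.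

Lemma rp_ge1 m x : 1 <= x -> 1 <= Rpower x (/ INR (m + 1)).
Proof. intros Hx. rewrite <- (rp_inv m 1) by lra. rewrite pow1.
apply Rle_Rpower_l. left; apply Rinv_0_lt_compat, INR_m1_pos. lra. Qed.

Lemma rp_lt m a b : 1 <= a -> a < b -> Rpower a (/ INR (m + 1)) < Rpower b (/ INR (m + 1)).
Proof. intros. apply Rlt_Rpower_l. apply Rinv_0_lt_compat, INR_m1_pos. lra. Qed.

Lemma f1_phi n m a : f1 n m a = phi (m + 2) (n - m) a.
Proof. reflexivity. Qed.

Lemma f1_split n m t : f1 n m t = t ^ (m + 1) * phi 1 (n - m) t.
Proof. unfold f1, phi. replace (m + 2)%nat with (S (m + 1)) by lia. simpl. ring. Qed.

Lemma g1_eq n m x : 1 <= x -> g1 n m x = phi 1 (n - m) (Rpower x (/ INR (m + 1))).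
Proof. intros Hx. unfold g1. rewrite f1_split, rp_pow by lra. field. lra. Qed.

Lemma g1_mono n m a b : 1 <= a -> a < b -> g1 n m a < g1 n m b.
Proof. intros. rewrite !g1_eq by lra. apply phi_mono. lia. apply rp_ge1; lra. apply rp_lt; lra. Qed.

Lemma g1_at n m x : 1 <= x -> f1 n m (Rpower x (/ INR (m + 1))) = x -> g1 n m x = 1.
Proof. intros Hx E. unfold g1. rewrite E. field. lra. Qed.

Lemma key_bound n m g0 gamma alpha : (m <= n)%nat -> 1 <= g0 -> f1 n m (Rpower g0 (/ INR (m + 1))) = g0 ->
  g0 < gamma -> 1 < alpha -> f1 n m alpha = gamma -> alpha ^ (S m) < gamma.
Proof. intros Hmn Hg0 E0 Hg Ha Ef.
assert (G1 : 1 < g1 n m gamma) by (rewrite <- (g1_at n m g0) by auto; apply g1_mono; lra).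
set (t := Rpower gamma (/ INR (m + 1))).
assert (Ht1 : 1 <= t) by (apply rp_ge1; lra).
assert (Hft : gamma < f1 n m t).
{ unfold g1 in G1. fold t in G1. apply (Rmult_lt_reg_l (/ gamma)). apply Rinv_0_lt_compat; lra.
  rewrite Rinv_l by lra. exact G1. }
assert (Hat : alpha < t).
{ destruct (Rlt_le_dec alpha t) as [h|h]; auto. exfalso.
  assert (f1 n m t <= f1 n m alpha) by (rewrite !f1_phi; apply phi_mono_le; lra || lia). lra. }
replace (S m) with (m + 1)%nat by lia. rewrite <- (rp_pow m gamma) by lra. fold t.
apply pow_lt_mono; lra || lia. Qed.

Theorem proposition5 (n : nat) (u : nat -> R)
  (hmono : forall i j : nat, (i < j <= n)%nat -> u i <= u j) :
  let m := m_count n u in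
  (forall a b, 1 <= a -> a < b -> f1 n m a < f1 n m b) /\
  (forall M, exists A, forall a, A <= a -> M < f1 n m a) /\
  (forall a b, 1 <= a -> a < b -> g1 n m a < g1 n m b) /\
  (forall M, exists A, 1 <= A /\ forall a, A <= a -> M < g1 n m a) /\
  (exists g0, (1 <= g0 /\ f1 n m (Rpower g0 (/ INR (m + 1))) = g0) /\
     forall g0', 1 <= g0' -> f1 n m (Rpower g0' (/ INR (m + 1))) = g0' -> g0' = g0) /\
  (forall g0, 1 <= g0 -> f1 n m (Rpower g0 (/ INR (m + 1))) = g0 ->
    (forall gamma, g0 < gamma ->
       exists alpha, (1 < alpha /\ f1 n m alpha = gamma) /\
         forall alpha', 1 < alpha' -> f1 n m alpha' = gamma -> alpha' = alpha) /\
    (forall gamma alpha, g0 < gamma -> 1 < alpha -> f1 n m alpha = gamma ->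
       (exists r, is_minimizer n u gamma r) /\
       forall r, is_minimizer n u gamma r ->
         r 1%nat = alpha / gamma /\
         (forall i, (i < n)%nat -> u i < u (S i) -> r (S (S i)) = alpha * r (S i)) /\
         (forall i, (i < n)%nat -> u i = u (S i) -> r (S (S i)) = beta_of alpha * r (S i))) /\
    (forall gamma gamma' r r', g0 < gamma -> gamma < gamma' ->
       is_minimizer n u gamma r -> is_minimizer n u gamma' r' ->
       L_OPN n u r' < L_OPN n u r) /\
    (forall M, exists G, forall gamma alpha, G < gamma -> 1 < alpha ->
       f1 n m alpha = gamma -> M < alpha) /\
    (forall eps, 0 < eps -> exists G, forall gamma alpha, G < gamma -> 1 < alpha ->
       f1 n m alpha = gamma -> Rabs (beta_of alpha - 1) < eps)).
Proof.
intros m.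
assert (Fm : forall a b, 1 <= a -> a < b -> f1 n m a < f1 n m b).
{ intros a b Ha Hab. rewrite !f1_phi. apply phi_mono; lra || lia. }
assert (Fml : forall a b, 1 <= a -> a <= b -> f1 n m a <= f1 n m b).
{ intros a b Ha Hab. rewrite !f1_phi. apply phi_mono_le; lra || lia. }
assert (F1le : f1 n m 1 <= 1) by (rewrite f1_phi; apply phi_1_le).
assert (AEx : forall gamma, 1 < gamma -> exists alpha, (1 < alpha /\ f1 n m alpha = gamma) /\
         forall alpha', 1 < alpha' -> f1 n m alpha' = gamma -> alpha' = alpha).
{ intros gamma Hg. destruct (phi_surj (m + 2) (n - m) gamma ltac:(lia) ltac:(lra)) as [t [Ht Et]].
  rewrite <- f1_phi in Et.
  assert (1 < t). { destruct (Req_dec t 1) as [e|e]. subst t. lra. lra. }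
  exists t. split. split; auto.
  intros a' Ha' E'. destruct (Rtotal_order a' t) as [h|[h|h]]; auto.
  - assert (f1 n m a' < f1 n m t) by (apply Fm; lra). lra.
  - assert (f1 n m t < f1 n m a') by (apply Fm; lra). lra. }
split; [exact Fm|].
split.
{ intros M. destruct (phi_unb (m + 2) (n - m) ltac:(lia) M) as [A [_ HA]]. exists A. exact HA. }
split.
{ intros a b Ha Hab. apply g1_mono; auto. }
split.
{ intros M. destruct (phi_unb 1 (n - m) ltac:(lia) M) as [T [HT1 HT]].
  exists (T ^ (m + 1)). split. apply pow_R1_Rle; lra.
  intros a Ha. assert (1 <= a) by (pose proof (pow_R1_Rle T (m + 1) HT1); lra).
  rewrite g1_eq by lra. apply HT.
  rewrite <- (rp_inv m T) by lra. apply Rle_Rpower_l. left; apply Rinv_0_lt_compat, INR_m1_pos.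
  split; [apply pow_lt; lra| lra]. }
split.
{ destruct (phi_surj 1 (n - m) 1 ltac:(lia) ltac:(lra)) as [t0 [Ht0 E0]].
  exists (t0 ^ (m + 1)). split.
  - split. apply pow_R1_Rle; lra.
    rewrite rp_inv by lra. rewrite f1_split, E0. ring.
  - intros g' Hg' E'.
    assert (Hg0 : 1 <= t0 ^ (m + 1)) by (apply pow_R1_Rle; lra).
    assert (E0' : f1 n m (Rpower (t0 ^ (m + 1)) (/ INR (m + 1))) = t0 ^ (m + 1)).
    { rewrite rp_inv by lra. rewrite f1_split, E0. ring. }
    pose proof (g1_at n m g' Hg' E'). pose proof (g1_at n m _ Hg0 E0').
    destruct (Rtotal_order g' (t0 ^ (m + 1))) as [h|[h|h]]; auto.
    + pose proof (g1_mono n m _ _ Hg' h). lra.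
    + pose proof (g1_mono n m _ _ Hg0 h). lra. }
intros g0 Hg0 Eg0.
assert (Hmn : (m <= n)%nat) by (unfold m; apply (cnt_le u n)).
assert (KB : forall gamma alpha, g0 < gamma -> 1 < alpha -> f1 n m alpha = gamma -> alpha ^ (S m) < gamma)
  by (intros; eapply key_bound; eauto).
assert (MIN : forall gamma alpha, g0 < gamma -> 1 < alpha -> f1 n m alpha = gamma ->
       (exists r, is_minimizer n u gamma r) /\
       forall r, is_minimizer n u gamma r ->
         r 0%nat = / gamma /\ forall k, (k <= S n)%nat -> r (S k) = rho n u alpha k * r k).
{ intros gamma alpha Hg Ha Ef.
  pose proof (KB gamma alpha Hg Ha Ef) as Hk. rewrite <- Ef in Hk |- *.
  pose proof (main_ineq n u hmono alpha Ha Hk) as MI.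
  split.
  - exists (rstar n u alpha (f1 n (m_count n u) alpha)). split.
    + apply rstar_adm; auto.
    + intros r' Hr'. apply (MI r' Hr').
  - intros r [Hr Hmin]. apply (MI r Hr). apply Hmin. apply rstar_adm; auto. }
split; [intros; apply AEx; lra|].
split.
{ intros gamma alpha Hg Ha Ef. destruct (MIN gamma alpha Hg Ha Ef) as [Ex Ch]. split; auto.
  intros r Hr. destruct (Ch r Hr) as [R0 Rk]. split; [|split].
  - rewrite (Rk 0%nat) by lia. rewrite R0. unfold rho, isS. unfold Rdiv. ring.
  - intros i Hi Hlt. rewrite (Rk (S i)) by lia. unfold rho, isS.
    assert (E : Nat.ltb i n = true) by (apply Nat.ltb_lt; lia). rewrite E.
    destruct (Rlt_dec (u i) (u (S i))); [reflexivity|tauto].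
  - intros i Hi Heq. rewrite (Rk (S i)) by lia. unfold rho, isS.
    assert (E : Nat.ltb i n = true) by (apply Nat.ltb_lt; lia). rewrite E.
    destruct (Rlt_dec (u i) (u (S i))); [lra|reflexivity]. }
split.
{ intros gamma gamma' r r' Hg Hgg [Hr Hmr] [Hr' Hmr'].
  destruct (AEx gamma' ltac:(lra)) as [al' [[Hal' Ef'] _]].
  destruct (Rlt_le_dec (L_OPN n u r') (L_OPN n u r)) as [h|h]; auto. exfalso.
  assert (Hra : admissible n gamma' r).
  { intros k Hk. destruct (Hr k Hk). split; [|lra].
    assert (/ gamma' < / gamma) by (apply Rinv_lt_contravar; nra). lra. }
  assert (Hmin2 : is_minimizer n u gamma' r).
  { split; auto. intros r'' Hr''. specialize (Hmr' r'' Hr''). lra. }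
  destruct (MIN gamma' al' ltac:(lra) Hal' Ef') as [_ Ch].
  destruct (Ch r Hmin2) as [R0 _].
  destruct (Hr 0%nat ltac:(lia)).
  assert (/ gamma' < / gamma) by (apply Rinv_lt_contravar; nra). lra. }
assert (ALim : forall M, exists G, forall gamma alpha, G < gamma -> 1 < alpha ->
       f1 n m alpha = gamma -> M < alpha).
{ intros M. exists (f1 n m (Rmax M 1)). intros gamma alpha HG Ha Ef.
  destruct (Rlt_le_dec M alpha) as [h|h]; auto. exfalso.
  assert (f1 n m alpha <= f1 n m (Rmax M 1)).
  { apply Fml. lra. eapply Rle_trans; [exact h| apply Rmax_l]. }
  lra. }
split; [exact ALim|].
intros eps Heps. destruct (ALim (4 / eps)) as [G HG]. exists G.
intros gamma alpha Hg Ha Ef. specialize (HG gamma alpha Hg Ha Ef).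
rewrite beta_eq by lra.
replace (1 - 4 / (alpha + 3) - 1) with (- (4 / (alpha + 3))) by ring.
rewrite Rabs_Ropp. rewrite Rabs_pos_eq by (apply Rlt_le, Rdiv_lt_0_compat; lra).
apply (Rmult_lt_reg_r (alpha + 3)); [lra|]. unfold Rdiv. rewrite Rmult_assoc, Rinv_l by lra.
assert (4 < eps * alpha).
{ apply (Rmult_lt_reg_l (/ eps)). apply Rinv_0_lt_compat; lra.
  rewrite <- Rmult_assoc, Rinv_l by lra. unfold Rdiv in HG. lra. }
nra.
Qed.
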